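(* For any graph $G$, $\mathcal{Z}^{\mathrm{TE}}_-(\check G)=\mathcal{Z}^{\mathrm{TE}}_-(G)$ and $\mathcal{Z}^{\mathrm{TS}}_-(\check G)=\mathcal{Z}^{\mathrm{TS}}_-(G)$, where $\check G$ is the skew-nontrivial subgraph of $G$.
   Context: Skew forcing: vertices are colored blue or white; if any vertex $u$ (blue or white) has exactly one white neighbor $v$, then $u$ may force $v$ to become blue. A skew forcing set is a (possibly empty) set of initially blue vertices from which repeated application of this rule turns every vertex blue; $\mathrm{Z}_-(G)$ is the minimum size of a skew forcing set. The skew-nontrivial subgraph $\check G$ of $G$ is obtained as follows: starting with no blue vertices, apply the skew forcing rule until no more forces are possible; then delete every blue vertex all of whose neighbors are blue, and delete every edge both of whose endpoints are blue. $\mathcal{Z}^{\mathrm{TE}}_-(G)$ has as vertices the minimum skew forcing sets of $G$, with $S_1S_2$ an edge iff $S_1\setminus S_2=\{v_1\}$ and $S_2\setminus S_1=\{v_2\}$ for some vertices $v_1,v_2$; $\mathcal{Z}^{\mathrm{TS}}_-(G)$ has the same vertices with the additional requirement $v_1v_2\in E(G)$. *)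

(* Defs.v *)
From mathcomp Require Import all_boot.
Set Implicit Arguments. Unset Strict Implicit. Unset Printing Implicit Defensive.

Record graph (T : finType) := Graph { gverts : {set T}; gadj : rel T }.

Definition simple_graph (T : finType) (G : graph T) : Prop :=
  [/\ forall x y, gadj G x y = gadj G y x,
      forall x, ~~ gadj G x x &
      forall x y, gadj G x y -> (x \in gverts G) && (y \in gverts G)].

Section Skew.
Variables (T : finType) (G : graph T).

Definition nbhd (u : T) : {set T} := [set v in gverts G | gadj G u v].

(* one round of the skew forcing rule: every vertex u of G (blue or white)
   with exactly one white neighbour v forces v (all forces valid in B are
   performed; performing them one after another is legitimate since blue
   sets only grow). *)
Definition skew_step (B : {set T}) : {set T} :=
  B :|: [set v | [exists u in gverts G, nbhd u :\: B == [set v]]].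

(* final blue set: apply the rule until no more forces are possible
   (#|T| rounds suffice since each non-stable round adds a vertex). *)
Definition skew_closure (S : {set T}) : {set T} := iter #|T| skew_step S.

Definition skew_forcing (S : {set T}) : bool :=
  (S \subset gverts G) && (gverts G \subset skew_closure S).

Definition min_skew_forcing_sets : {set {set T}} :=
  [set S | skew_forcing S &&
           [forall S' : {set T}, skew_forcing S' ==> (#|S| <= #|S'|)]].

Definition skew_nontrivial : graph T :=
  let B := skew_closure set0 in
  let V' := gverts G :\: [set x in B | nbhd x \subset B] in
  Graph V' (fun x y => [&& gadj G x y, ~~ ((x \in B) && (y \in B)),
                          x \in V' & y \in V']).

Definition ZTE : graph {set T} :=
  Graph min_skew_forcing_sets
    (fun S1 S2 => [&& S1 \in min_skew_forcing_sets, S2 \in min_skew_forcing_sets &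
       [exists v1, exists v2, (S1 :\: S2 == [set v1]) && (S2 :\: S1 == [set v2])]]).

Definition ZTS : graph {set T} :=
  Graph min_skew_forcing_sets
    (fun S1 S2 => [&& S1 \in min_skew_forcing_sets, S2 \in min_skew_forcing_sets &
       [exists v1, exists v2, [&& S1 :\: S2 == [set v1], S2 :\: S1 == [set v2]
                                 & gadj G v1 v2]]]).
End Skew.

(* Main.v *)
Require Import Defs.
From mathcomp Require Import all_boot.
From mathcomp Require Import zify.
From Stdlib Require Import FunctionalExtensionality.
Set Implicit Arguments. Unset Strict Implicit. Unset Printing Implicit Defensive.

Definition sclosed (T : finType) (G : graph T) (X : {set T}) : Prop :=
  forall u v, u \in gverts G -> nbhd G u :\: X = [set v] -> v \in X.

Lemma in_step (T : finType) (G : graph T) (X : {set T}) v :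
  (v \in skew_step G X) = (v \in X) || [exists u in gverts G, nbhd G u :\: X == [set v]].
Proof. by rewrite /skew_step in_setU in_set. Qed.

Lemma step_sub (T : finType) (G : graph T) (X : {set T}) : X \subset skew_step G X.
Proof. exact: subsetUl. Qed.

Lemma step_least (T : finType) (G : graph T) (X Y : {set T}) :
  X \subset Y -> sclosed G Y -> skew_step G X \subset Y.
Proof.
move=> XY cY; apply/subsetP => v; rewrite in_step => /orP[vX|/existsP[u /andP[uV /eqP e]]].
  exact: (subsetP XY).
apply: contraT => vY.
suff h : nbhd G u :\: Y = [set v] by rewrite (cY u v uV h) in vY.
apply/setP => w; rewrite in_setD in_set1.
case: (eqVneq w v) => [->|wv] /=.
  have : v \in nbhd G u :\: X by rewrite e set11.
  rewrite in_setD => /andP[_ hv]; rewrite hv vY.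
  by [].
case: (boolP (w \in Y)) => //= wY; apply/negP => wN.
have wX : w \notin X by apply/negP => /(subsetP XY); rewrite (negbTE wY).
have : w \in nbhd G u :\: X by rewrite in_setD wX wN.
by rewrite e in_set1 (negbTE wv).
Qed.

Lemma iter_least (T : finType) (G : graph T) (S Y : {set T}) k :
  S \subset Y -> sclosed G Y -> iter k (skew_step G) S \subset Y.
Proof. by move=> SY cY; elim: k => //= k IH; apply: step_least. Qed.

Lemma cl_least (T : finType) (G : graph T) (S Y : {set T}) :
  S \subset Y -> sclosed G Y -> skew_closure G S \subset Y.
Proof. exact: iter_least. Qed.

Lemma iter_mono (T : finType) (G : graph T) (S : {set T}) m n :
  m <= n -> iter m (skew_step G) S \subset iter n (skew_step G) S.
Proof.
move=> /subnK <-; elim: (n - m) => [|k IH]; first by rewrite add0n.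
by rewrite addSn /=; apply: subset_trans IH (step_sub _ _).
Qed.

Lemma sub_cl (T : finType) (G : graph T) (S : {set T}) : S \subset skew_closure G S.
Proof. exact: (@iter_mono T G S 0). Qed.

Lemma cl_closed (T : finType) (G : graph T) (S : {set T}) : sclosed G (skew_closure G S).
Proof.
pose f m := iter m (skew_step G) S.
have lt m : f m != f m.+1 -> #|f m| < #|f m.+1|.
  move=> ne; apply: proper_card; rewrite properEneq ne; exact: step_sub.
have Q m : f m = f m.+1 \/ m < #|f m.+1|.
  elim: m => [|m IH].
    case: (eqVneq (f 0) (f 1)) => [e|ne]; first by left.
    by right; have := lt 0 ne; lia.
  case: (eqVneq (f m.+1) (f m.+2)) => [e|ne]; first by left.
  case: IH => [e|h].
    by left; change (skew_step G (f m) = skew_step G (f m.+1)); rewrite -e.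
  by right; have := lt _ ne; lia.
have [e|h] := Q #|T|; last by have := max_card (f #|T|.+1); move: h; clearbody f; lia.
move=> u v uV hn.
have : v \in f #|T|.+1 by rewrite /f /= in_step; apply/orP; right; apply/existsP;
  exists u; rewrite uV hn eqxx.
by rewrite -e.
Qed.

Lemma cl_mono (T : finType) (G : graph T) (S S' : {set T}) :
  S \subset S' -> skew_closure G S \subset skew_closure G S'.
Proof. move=> SS'; apply: cl_least; [exact: subset_trans SS' (sub_cl _ _) | exact: cl_closed]. Qed.

Definition Bs (T : finType) (G : graph T) := skew_closure G set0.
Definition Ds (T : finType) (G : graph T) := [set x in Bs G | nbhd G x \subset Bs G].

Lemma DsE (T : finType) (G : graph T) x :
  (x \in Ds G) = (x \in Bs G) && (nbhd G x \subset Bs G).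
Proof. by rewrite /Ds in_set. Qed.

Lemma nbhdE (T : finType) (G : graph T) u v :
  (v \in nbhd G u) = (v \in gverts G) && gadj G u v.
Proof. by rewrite /nbhd in_set. Qed.

Lemma vert_nt (T : finType) (G : graph T) :
  gverts (skew_nontrivial G) = gverts G :\: Ds G.
Proof. by []. Qed.

Lemma adj_nt (T : finType) (G : graph T) x y :
  gadj (skew_nontrivial G) x y = [&& gadj G x y, ~~ ((x \in Bs G) && (y \in Bs G)),
     x \in gverts G :\: Ds G & y \in gverts G :\: Ds G].
Proof. by []. Qed.

Lemma nbhd_V (T : finType) (G : graph T) u : nbhd G u \subset gverts G.
Proof. by apply/subsetP => v; rewrite nbhdE => /andP[]. Qed.

Lemma V_closed (T : finType) (G : graph T) : sclosed G (gverts G).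
Proof.
move=> u v _ e; have : v \in nbhd G u :\: gverts G by rewrite e set11.
by rewrite in_setD => /andP[/negP nv /(subsetP (nbhd_V G u))].
Qed.

Lemma B_V (T : finType) (G : graph T) : Bs G \subset gverts G.
Proof. apply: cl_least; [exact: sub0set | exact: V_closed]. Qed.

Lemma D_B (T : finType) (G : graph T) : Ds G \subset Bs G.
Proof. by apply/subsetP => x; rewrite DsE => /andP[]. Qed.

Lemma B_closed (T : finType) (G : graph T) : sclosed G (Bs G).
Proof. exact: cl_closed. Qed.

Lemma nbhd_nt_X (T : finType) (G : graph T) (X : {set T}) u :
  Bs G \subset X -> u \in gverts (skew_nontrivial G) ->
  nbhd (skew_nontrivial G) u :\: X = nbhd G u :\: X.
Proof.
move=> BX uV'; apply/setP => v; rewrite !in_setD.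
case vX: (v \in X) => //=.
have vB : v \in Bs G = false by apply/negbTE/negP => /(subsetP BX); rewrite vX.
have vD : v \in Ds G = false by apply/negbTE/negP => /(subsetP (D_B G)); rewrite vB.
rewrite !nbhdE adj_nt -vert_nt uV' vert_nt !in_setD vD vB andbF /=.
by case: (v \in gverts G); rewrite ?andbT.
Qed.

Lemma closed_nt (T : finType) (G : graph T) (X : {set T}) :
  Bs G \subset X -> sclosed G X <-> sclosed (skew_nontrivial G) X.
Proof.
move=> BX; split=> cX u v uV e.
  apply: (cX u v); first by move: uV; rewrite vert_nt in_setD => /andP[].
  by rewrite -(nbhd_nt_X BX uV).
have uV' : u \in gverts (skew_nontrivial G).
  rewrite vert_nt in_setD uV andbT; apply/negP => uD.
  have : v \in nbhd G u :\: X by rewrite e set11.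
  rewrite in_setD => /andP[/negP vX vN]; apply: vX.
  apply: (subsetP BX); move: uD; rewrite DsE => /andP[_ /subsetP]; exact.
by apply: (cX u v uV'); rewrite (nbhd_nt_X BX uV').
Qed.

Lemma nbhd_W (T : finType) (G : graph T) u :
  u \in gverts G :\: Ds G -> u \notin Bs G ->
  nbhd (skew_nontrivial G) u = nbhd G u :\: Ds G.
Proof.
move=> uV' uB; apply/setP => v.
rewrite in_setD !nbhdE adj_nt uV' (negbTE uB) /= -vert_nt !in_setD -/(Ds G).
by case: (v \in Ds G); case: (v \in gverts G); case: (gadj G u v).
Qed.

Lemma forcerB (T : finType) (G : graph T) (X : {set T}) u v :
  X \subset Bs G -> nbhd G u :\: X = [set v] -> v \in Bs G -> u \in Bs G -> u \in Ds G.
Proof.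
move=> XB e vB uB; rewrite DsE uB /=; apply/subsetP => w wN.
case wX: (w \in X); first exact: (subsetP XB).
have : w \in nbhd G u :\: X by rewrite in_setD wX wN.
by rewrite e in_set1 => /eqP ->.
Qed.

Lemma forcerD (T : finType) (G : graph T) u v :
  (forall x y, gadj G x y = gadj G y x) ->
  u \in gverts G -> v \in nbhd G u -> v \in Ds G -> u \in Bs G.
Proof.
move=> sym uV; rewrite nbhdE => /andP[_ a]; rewrite DsE => /andP[_ /subsetP]; apply.
by rewrite nbhdE uV sym.
Qed.

Definition Us (T : finType) (G : graph T) (X : {set T}) :=
  [set u in Ds G | nbhd G u \subset X].
Definition bad (T : finType) (G : graph T) (X : {set T}) : bool :=
  [exists u in Ds G, [exists x, (x \notin Ds G) && (nbhd G u :\: X == [set x])]].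

Lemma UsE (T : finType) (G : graph T) (X : {set T}) u :
  (u \in Us G X) = (u \in Ds G) && (nbhd G u \subset X).
Proof. by rewrite /Us in_set. Qed.

Lemma Rstep (T : finType) (G : graph T) (X : {set T}) :
  (forall x y, gadj G x y = gadj G y x) -> X \subset Bs G ->
  #|skew_step G X :&: Ds G| + #|Us G X| + bad G X
    <= #|Us G (skew_step G X)| + #|X :&: Ds G|.
Proof.
move=> sym XB; set X' := skew_step G X.
pose F := [set u in Ds G | [exists v, nbhd G u :\: X == [set v]]].
pose g u := odflt u [pick v | nbhd G u :\: X == [set v]].
have gE u v : nbhd G u :\: X = [set v] -> g u = v.
  move=> e; rewrite /g; case: pickP => [w /eqP|] /=.
    by rewrite e => /set1_inj.
  by move/(_ v); rewrite e eqxx.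
have FE u : (u \in F) = (u \in Ds G) && [exists v, nbhd G u :\: X == [set v]].
  by rewrite /F in_set.
have hU : #|Us G X| + #|F| <= #|Us G X'|.
  have disj : Us G X :&: F = set0.
    apply/setP => u; rewrite in_setI UsE FE in_set0.
    apply/negP => /andP[/andP[_ sX] /andP[_ /existsP[v /eqP e]]].
    have : v \in nbhd G u :\: X by rewrite e set11.
    by rewrite in_setD => /andP[/negP vX /(subsetP sX)].
  have sub : Us G X :|: F \subset Us G X'.
    apply/subsetP => u; rewrite in_setU UsE FE UsE.
    case/orP => [/andP[uD sX]|/andP[uD /existsP[v /eqP e]]]; rewrite uD /=.
      exact: subset_trans sX (step_sub _ _).
    apply/subsetP => w wN; rewrite /X' in_step.
    case wX: (w \in X) => //=.
    have : w \in nbhd G u :\: X by rewrite in_setD wX wN.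
    rewrite e in_set1 => /eqP ->; apply/existsP; exists u.
    rewrite e eqxx andbT; exact: (subsetP (B_V G)) (subsetP (D_B G) _ uD).
  have := cardsUI (Us G X) F; rewrite disj cards0 addn0 => <-.
  exact: subset_leq_card.
have hF : #|g @: F| <= #|F| := leq_imset_card _ _.
have key : X' :&: Ds G \subset (X :&: Ds G) :|: g @: F.
  apply/subsetP => v; rewrite in_setI /X' in_step.
  case/andP => [/orP[vX|/existsP[u /andP[uV /eqP e]]] vD].
    by rewrite in_setU in_setI vX vD.
  rewrite in_setU; apply/orP; right; apply/imsetP; exists u; last by rewrite (gE _ _ e).
  have vN : v \in nbhd G u.
    have : v \in nbhd G u :\: X by rewrite e set11.
    by rewrite in_setD => /andP[].
  have uB : u \in Bs G by apply: (forcerD sym uV vN vD).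
  have uD : u \in Ds G by apply: (forcerB XB e _ uB); exact: (subsetP (D_B G)).
  by rewrite FE uD /=; apply/existsP; exists v; rewrite e.
have hUI := cardsUI (X :&: Ds G) (g @: F).
have hcard : #|X' :&: Ds G| + bad G X <= #|X :&: Ds G| + #|g @: F|.
  case: (boolP (bad G X)) => [/existsP[u0 /andP[u0D /existsP[x /andP[xD /eqP e0]]]]|_].
    have xg : x \in g @: F.
      apply/imsetP; exists u0; last by rewrite (gE _ _ e0).
      by rewrite FE u0D /=; apply/existsP; exists x; rewrite e0.
    have sub : x |: (X' :&: Ds G) \subset (X :&: Ds G) :|: g @: F.
      by apply/subsetP => y; rewrite in_setU1 => /orP[/eqP ->|/(subsetP key)//];
        rewrite in_setU xg orbT.
    have := subset_leq_card sub; rewrite cardsU1 in_setI (negbTE xD) andbF /=.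
    lia.
  have := subset_leq_card key; lia.
lia.
Qed.

Lemma iterB (T : finType) (G : graph T) t : iter t (skew_step G) set0 \subset Bs G.
Proof. apply: iter_least; [exact: sub0set | exact: B_closed]. Qed.

Lemma Qt (T : finType) (G : graph T) :
  (forall x y, gadj G x y = gadj G y x) -> forall t,
  #|iter t (skew_step G) set0 :&: Ds G| <= #|Us G (iter t (skew_step G) set0)|.
Proof.
move=> sym; elim=> [|t IH] /=; first by rewrite set0I cards0.
have := Rstep sym (iterB G t); lia.
Qed.

Lemma noBad (T : finType) (G : graph T) t :
  (forall x y, gadj G x y = gadj G y x) -> t < #|T| ->
  bad G (iter t (skew_step G) set0) = false.
Proof.
move=> sym lt; apply/negbTE/negP => hb.
have h k : #|iter (t.+1 + k) (skew_step G) set0 :&: Ds G|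
           < #|Us G (iter (t.+1 + k) (skew_step G) set0)|.
  elim: k => [|k IH].
    rewrite addn0 /=; have := Rstep sym (iterB G t); rewrite hb.
    have := Qt sym t; lia.
  rewrite addnS; change (#|skew_step G (iter (t.+1 + k) (skew_step G) set0) :&: Ds G| < #|Us G (skew_step G (iter (t.+1 + k) (skew_step G) set0))|).
  have := Rstep sym (iterB G (t.+1 + k)); lia.
have := h (#|T| - t.+1); rewrite subnKC // -/(skew_closure G set0) -/(Bs G).
rewrite (setIidPr (D_B G)).
have : Us G (Bs G) \subset Ds G by apply/subsetP => u; rewrite UsE => /andP[].
move/subset_leq_card; lia.
Qed.

Lemma H3 (T : finType) (G : graph T) :
  (forall x y, gadj G x y = gadj G y x) ->
  Bs G :\: Ds G \subset skew_closure (skew_nontrivial G) set0.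
Proof.
move=> sym; set C := skew_closure _ set0.
have cC : sclosed (skew_nontrivial G) C := @cl_closed _ _ _.
suff : forall t, t <= #|T| -> iter t (skew_step G) set0 :\: Ds G \subset C by apply.
elim=> [|t IH] lt; first by rewrite set0D sub0set.
apply/subsetP => x; rewrite in_setD => /andP[xD].
rewrite /= in_step => /orP[xt|/existsP[u /andP[uV /eqP e]]].
  by apply: (subsetP (IH (ltnW lt))); rewrite in_setD xD xt.
have uD : u \notin Ds G.
  apply/negP => uD; have := noBad sym lt; rewrite /bad.
  move/negbT/negP; apply; apply/existsP; exists u; rewrite uD /=.
  by apply/existsP; exists x; rewrite xD e eqxx.
have xB : x \in Bs G.
  apply: (subsetP (iterB G t.+1)); rewrite /= in_step; apply/orP; right.
  by apply/existsP; exists u; rewrite uV e eqxx.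
have uB : u \notin Bs G.
  by apply/negP => uB; move: uD; rewrite (forcerB (iterB G t) e xB uB).
have uV' : u \in gverts G :\: Ds G by rewrite in_setD uD uV.
have xN : x \in nbhd G u.
  have : x \in nbhd G u :\: iter t (skew_step G) set0 by rewrite e set11.
  by rewrite in_setD => /andP[].
apply: contraT => xC.
have uV2 : u \in gverts (skew_nontrivial G) by rewrite vert_nt.
suff h : nbhd (skew_nontrivial G) u :\: C = [set x] by rewrite (cC u x uV2 h) in xC.
rewrite (nbhd_W uV' uB); apply/setP => w; rewrite !in_setD in_set1.
case: (eqVneq w x) => [->|wx]; first by rewrite xC xD xN.
case wC: (w \in C) => //; case wD: (w \in Ds G) => //; case wN: (w \in nbhd G u) => //=.
case wt: (w \in iter t (skew_step G) set0).
  by move: wC; rewrite (subsetP (IH (ltnW lt))) // in_setD wD wt.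
have : w \in nbhd G u :\: iter t (skew_step G) set0 by rewrite in_setD wt wN.
by rewrite e in_set1 (negbTE wx).
Qed.

Lemma T1 (T : finType) (G : graph T) (S : {set T}) :
  skew_forcing (skew_nontrivial G) S -> skew_forcing G S.
Proof.
rewrite /skew_forcing vert_nt => /andP[SV' V'C].
rewrite (subset_trans SV' (subsetDl _ _)) /=.
have BC : Bs G \subset skew_closure G S by apply: cl_mono; exact: sub0set.
have cC : sclosed (skew_nontrivial G) (skew_closure G S).
  by apply/(closed_nt BC); exact: cl_closed.
have C'C : skew_closure (skew_nontrivial G) S \subset skew_closure G S.
  by apply: cl_least cC; exact: sub_cl.
apply/subsetP => v vV; case vD: (v \in Ds G).
  exact: (subsetP BC) (subsetP (D_B G) _ vD).
by apply: (subsetP C'C); apply: (subsetP V'C); rewrite in_setD vD vV.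
Qed.

Lemma T2 (T : finType) (G : graph T) (S : {set T}) :
  (forall x y, gadj G x y = gadj G y x) ->
  skew_forcing G S -> (forall x, x \in S -> x \notin Bs G) ->
  skew_forcing (skew_nontrivial G) S.
Proof.
move=> sym /andP[SV VC] SB.
set C' := skew_closure (skew_nontrivial G) S.
have SV' : S \subset gverts G :\: Ds G.
  apply/subsetP => x xS; rewrite in_setD (subsetP SV _ xS) andbT.
  by apply/negP => /(subsetP (D_B G)); apply/negP; exact: SB.
rewrite /skew_forcing vert_nt SV' /=.
set Y := C' :|: Ds G.
have BY : Bs G \subset Y.
  apply/subsetP => x xB; rewrite in_setU; case xD: (x \in Ds G); first by rewrite orbT.
  rewrite orbF; apply: (subsetP (cl_mono (skew_nontrivial G) (sub0set S))).
  by apply: (subsetP (H3 sym)); rewrite in_setD xD xB.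
have cY : sclosed (skew_nontrivial G) Y.
  move=> u v uV e.
  have cC : sclosed (skew_nontrivial G) C' := @cl_closed _ _ _.
  rewrite in_setU (cC u v uV) //.
  rewrite -e; apply/setP => w; rewrite !in_setD in_setU.
  case wN: (w \in nbhd (skew_nontrivial G) u); rewrite ?andbF ?andbT //.
  have : w \in gverts (skew_nontrivial G) by apply: (subsetP (nbhd_V _ u)).
  by rewrite vert_nt in_setD => /andP[/negbTE -> _]; rewrite orbF.
have cYG : sclosed G Y by apply/(closed_nt BY).
have CY : skew_closure G S \subset Y.
  apply: cl_least cYG; apply: subset_trans (subsetUl _ _); exact: sub_cl.
apply/subsetP => v; rewrite in_setD => /andP[vD vV].
have : v \in Y by apply: (subsetP CY); apply: (subsetP VC).
by rewrite in_setU (negbTE vD) orbF.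
Qed.

Lemma T3 (T : finType) (G : graph T) (S : {set T}) :
  skew_forcing G S -> skew_forcing G (S :\: Bs G).
Proof.
move=> /andP[SV VC]; rewrite /skew_forcing (subset_trans (subsetDl _ _) SV) /=.
apply: subset_trans VC _; apply: cl_least; last exact: cl_closed.
apply/subsetP => x xS; case xB: (x \in Bs G).
  by apply: (subsetP (cl_mono G (sub0set (S :\: Bs G)))).
by apply: (subsetP (sub_cl _ _)); rewrite in_setD xB xS.
Qed.

Lemma minsE (T : finType) (H : graph T) S :
  (S \in min_skew_forcing_sets H) =
  skew_forcing H S && [forall S' : {set T}, skew_forcing H S' ==> (#|S| <= #|S'|)].
Proof. by rewrite /min_skew_forcing_sets in_set. Qed.

Lemma minB (T : finType) (G : graph T) S x :
  S \in min_skew_forcing_sets G -> x \in S -> x \notin Bs G.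
Proof.
rewrite minsE => /andP[fS /forallP mS] xS; apply/negP => xB.
have := mS (S :\: Bs G); rewrite T3 //= => le.
have sub : S :\: Bs G \subset S :\ x.
  by apply/subsetP => y; rewrite !in_setD in_set1 => /andP[yB ->];
     rewrite andbT; apply/negP => /eqP ey; rewrite ey xB in yB.
have := subset_leq_card sub; have := cardsD1 x S; rewrite xS /=; lia.
Qed.

Lemma mins_eq (T : finType) (G : graph T) :
  (forall x y, gadj G x y = gadj G y x) ->
  min_skew_forcing_sets (skew_nontrivial G) = min_skew_forcing_sets G.
Proof.
move=> sym; apply/setP => S; apply/idP/idP.
  rewrite !minsE => /andP[fS /forallP mS]; rewrite T1 //=.
  apply/forallP => S'; apply/implyP => fS'.
  have := mS (S' :\: Bs G); rewrite T2 ?T3 //=.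
    move=> le; apply: leq_trans le _; apply: subset_leq_card; exact: subsetDl.
  by move=> x; rewrite in_setD => /andP[].
move=> Sm; have SB := minB Sm; move: Sm.
rewrite !minsE => /andP[fS /forallP mS]; rewrite T2 //=.
apply/forallP => S'; apply/implyP => fS'; have := mS S'; rewrite T1 //.
Qed.

Unset Implicit Arguments.

Theorem theorem5p20 (T : finType) (G : graph T) :
  simple_graph G ->
  ZTE (skew_nontrivial G) = ZTE G /\ ZTS (skew_nontrivial G) = ZTS G.
Proof.
case=> sym _ _; have me := mins_eq sym.
split; first by rewrite /ZTE me.
rewrite /ZTS me; congr Graph.
apply: functional_extensionality => S1; apply: functional_extensionality => S2.
case S1m: (S1 \in min_skew_forcing_sets G) => //=.
case S2m: (S2 \in min_skew_forcing_sets G) => //=.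
apply: eq_existsb => v1; apply: eq_existsb => v2.
case e1: (S1 :\: S2 == [set v1]) => //=; case e2: (S2 :\: S1 == [set v2]) => //=.
have v1S : v1 \in S1.
  have : v1 \in S1 :\: S2 by rewrite (eqP e1) set11.
  by rewrite in_setD => /andP[].
have v2S : v2 \in S2.
  have : v2 \in S2 :\: S1 by rewrite (eqP e2) set11.
  by rewrite in_setD => /andP[].
have v1B := minB S1m v1S; have v2B := minB S2m v2S.
have inV S v : S \in min_skew_forcing_sets G -> v \in S -> v \in gverts G :\: Ds G.
  move=> Sm vS; rewrite in_setD; have := Sm; rewrite minsE => /andP[/andP[SV _] _].
  rewrite (subsetP SV _ vS) andbT; apply/negP => /(subsetP (D_B G)).
  by apply/negP; apply: (minB Sm).
by rewrite -adj_nt adj_nt (negbTE v1B) (inV _ _ S1m v1S) (inV _ _ S2m v2S) /= andbT.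
Qed.
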